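(* Fix a Bergman tree $\mathcal{T}_n$ with parameter $\lambda>0$. There is a constant $C>0$ (depending only on $n$ and $\lambda$) such that for every $M>0$ and all $\alpha,\alpha'\in\mathcal{T}_n$ with $d(\alpha)=d(\alpha')\ge 1$ and $d(c_\alpha,c_{\alpha'})>M$, we have $$(e^M-1)^{1/2}e^{-\lambda d(\alpha)}\le C\,\beta\!\left(\tfrac{c_\alpha}{|c_\alpha|},\tfrac{c_{\alpha'}}{|c_{\alpha'}|}\right).$$
   Context: Notation: $\mathbb{B}_n$ is the open unit ball of $\mathbb{C}^n$, $z\cdot w=\sum_j z_j\overline{w_j}$. For $z\in\mathbb{B}_n$, $\varphi_z$ is the involutive automorphism of $\mathbb{B}_n$ interchanging $0$ and $z$; the Bergman metric is $d(z,w)=\frac12\log\frac{1+|\varphi_z(w)|}{1-|\varphi_z(w)|}$ (so $d(0,z)=\tanh^{-1}|z|$), and $D(z,r)=\{w:d(z,w)<r\}$. The non-isotropic metric on $\partial\mathbb{B}_n$ is $\beta(\zeta,\eta)=|1-\zeta\cdot\eta|^{1/2}$. Bergman tree with parameter $\lambda>0$: for $r>0$ let $S_r=\{z:d(0,z)=r\}$ and for $z\neq0$ let $P_rz$ be the point of $S_r$ on the ray $\{tz:t>0\}$. For each integer $N\ge1$ fix points $z^N_1,\dots,z^N_{J_N}\in S_{\lambda N}$ and a partition of $S_{\lambda N}$ into Borel sets $Q^N_1,\dots,Q^N_{J_N}$ with $B_N(z^N_j,\lambda/2)\subseteq Q^N_j\subseteq B_N(z^N_j,2\lambda)$, where $B_N(z,s)=S_{\lambda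 N}\cap D(z,s)$. Set $K^N_j=\{z:\lambda N\le d(0,z)<\lambda(N+1),\ P_{\lambda N}z\in Q^N_j\}$ with center $c^N_j=P_{\lambda(N+1/2)}z^N_j$; the root is $K_o=\{z:d(0,z)<\lambda\}$ with center $0$. $\mathcal{T}_n$ is the index set consisting of $o$ and all pairs $\alpha=(N,j)$; write $K_\alpha$, $c_\alpha$ and $d(\alpha)=N$ (with $d(o)=0$). The sets $K_\alpha$ partition $\mathbb{B}_n$. Tree structure: $(N+1,i)$ is a child of $(N,j)$ (for $N\ge1$) if $P_{\lambda N}c^{N+1}_i\in Q^N_j$, and every $(1,j)$ is a child of $o$. Write $\beta\ge\alpha$ if $\beta$ equals $\alpha$ or is a descendant of $\alpha$, and $\beta>\alpha$ if moreover $\beta\neq\alpha$; $\mathcal{C}^\ell(\alpha)=\{\beta\ge\alpha:d(\beta)=d(\alpha)+\ell\}$. *)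

(* Defs.v *)
From Stdlib Require Vectors.Fin.
From Stdlib Require Import Reals.
Open Scope R_scope.

Definition C := (R * R)%type.
Definition Cadd (z w : C) : C := (fst z + fst w, snd z + snd w).
Definition Csub (z w : C) : C := (fst z - fst w, snd z - snd w).
Definition Cmul (z w : C) : C :=
  (fst z * fst w - snd z * snd w, fst z * snd w + snd z * fst w).
Definition Cmod2 (z : C) : R := fst z * fst z + snd z * snd z.
Definition Cmod (z : C) : R := sqrt (Cmod2 z).
Definition Cinv (z : C) : C := (fst z / Cmod2 z, - snd z / Cmod2 z).
Definition Cdiv (z w : C) : C := Cmul z (Cinv w).
Definition RtoC (r : R) : C := (r, 0).

Definition Cn (n : nat) := Fin.t n -> C.

Fixpoint fsum (n : nat) : (Fin.t n -> C) -> C :=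
  match n with
  | O => fun _ => (0, 0)
  | S m => fun f => Cadd (f Fin.F1) (fsum m (fun i => f (Fin.FS i)))
  end.

Definition conjC (z : C) : C := (fst z, - snd z).
Definition inner {n} (z w : Cn n) : C := fsum n (fun i => Cmul (z i) (conjC (w i))).
Definition vnorm {n} (z : Cn n) : R := sqrt (fst (inner z z)).
Definition vscale {n} (c : C) (z : Cn n) : Cn n := fun i => Cmul c (z i).
Definition vsub {n} (z w : Cn n) : Cn n := fun i => Csub (z i) (w i).

Definition in_ball {n} (z : Cn n) : Prop := vnorm z < 1.

(** The involutive automorphism phi_a of the ball interchanging 0 and a
    (Rudin, Function theory in the unit ball, 2.2.1):
    phi_a(z) = (a - P_a z - s_a Q_a z) / (1 - <z,a>),
    P_a z = (<z,a>/<a,a>) a  (= 0 when a = 0), Q_a = I - P_a, s_a = sqrt(1-|a|^2). *)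
Definition phi {n} (a z : Cn n) : Cn n :=
  let za := inner z a in
  let Pz := vscale (Cdiv za (inner a a)) a in
  let Qz := vsub z Pz in
  let sa := sqrt (1 - vnorm a * vnorm a) in
  fun i => Cdiv (Csub (Csub (a i) (Pz i)) (Cmul (RtoC sa) (Qz i)))
                (Csub (RtoC 1) za).

Definition bdist {n} (z w : Cn n) : R :=
  let t := vnorm (phi z w) in / 2 * ln ((1 + t) / (1 - t)).

Definition origin {n} : Cn n := fun _ => (0, 0).

Definition sphere {n} (r : R) (z : Cn n) : Prop := in_ball z /\ bdist origin z = r.

(** P_r z : the point of S_r on the ray {t z : t > 0}; since d(0,w) = artanh |w|,
    this is (tanh r / |z|) z. *)
Definition Pr {n} (r : R) (z : Cn n) : Cn n := vscale (RtoC (tanh r / vnorm z)) z.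

Definition beta {n} (zeta eta : Cn n) : R := sqrt (Cmod (Csub (RtoC 1) (inner zeta eta))).

Definition normalize {n} (z : Cn n) : Cn n := vscale (RtoC (/ vnorm z)) z.

Definition is_open {n} (U : Cn n -> Prop) : Prop :=
  forall x, U x -> exists eps, 0 < eps /\ forall y, vnorm (vsub y x) < eps -> U y.

Inductive borel {n} : (Cn n -> Prop) -> Prop :=
| borel_open : forall U, is_open U -> borel U
| borel_compl : forall A, borel A -> borel (fun x => ~ A x)
| borel_cunion : forall A : nat -> Cn n -> Prop,
    (forall k, borel (A k)) -> borel (fun x => exists k, A k x)
| borel_ext : forall A B, borel A -> (forall x, A x <-> B x) -> borel B.

Definition Bset {n} (lam : R) (N : nat) (z : Cn n) (s : R) (w : Cn n) : Prop :=
  sphere (lam * INR N) w /\ bdist z w < s.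

(** Data of a Bergman tree with parameter lam: for each level N >= 1, the number
    J N of points, the points z N j (j < J N, 0-based) and the sets Q N j. *)
Definition is_bergman_tree (n : nat) (lam : R) (J : nat -> nat)
  (z : nat -> nat -> Cn n) (Q : nat -> nat -> Cn n -> Prop) : Prop :=
  forall N : nat, (1 <= N)%nat ->
    (forall j, (j < J N)%nat -> sphere (lam * INR N) (z N j)) /\
    (forall j, (j < J N)%nat -> borel (Q N j)) /\
    (forall j, (j < J N)%nat -> forall w, Q N j w -> sphere (lam * INR N) w) /\
    (forall w, sphere (lam * INR N) w -> exists j, (j < J N)%nat /\ Q N j w) /\
    (forall j j' w, (j < J N)%nat -> (j' < J N)%nat -> Q N j w -> Q N j' w -> j = j') /\
    (forall j, (j < J N)%nat -> forall w, Bset lam N (z N j) (lam / 2) w -> Q N j w) /\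
    (forall j, (j < J N)%nat -> forall w, Q N j w -> Bset lam N (z N j) (2 * lam) w).

Definition center {n} (lam : R) (z : nat -> nat -> Cn n) (N j : nat) : Cn n :=
  Pr (lam * (INR N + / 2)) (z N j).

(* Main.v *)
Require Import Defs.
From Stdlib Require Import Reals Lra Psatz.
Open Scope R_scope.

Lemma Ceq (a b c d : R) : a = c -> b = d -> (a, b) = (c, d).
Proof. intros; subst; reflexivity. Qed.

Ltac csolve := repeat match goal with x : Defs.C |- _ => destruct x end;
  unfold Cadd, Csub, Cmul, conjC, RtoC, Cdiv, Cinv, Cmod2 in *; simpl in *; apply Ceq; try ring.

Lemma fsum_ext n (f g : Fin.t n -> Defs.C) : (forall i, f i = g i) -> fsum n f = fsum n g.
Proof. revert f g; induction n; intros f g H; simpl; auto.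
  rewrite H, (IHn (fun i => f (Fin.FS i)) (fun i => g (Fin.FS i))); auto. Qed.

Lemma fsum_add n (f g : Fin.t n -> Defs.C) :
  fsum n (fun i => Cadd (f i) (g i)) = Cadd (fsum n f) (fsum n g).
Proof. revert f g; induction n; intros f g; simpl. csolve.
  rewrite IHn. generalize (f Fin.F1) (g Fin.F1) (fsum n (fun i => f (Fin.FS i)))
    (fsum n (fun i => g (Fin.FS i))). intros; csolve. Qed.

Lemma fsum_scal n c (f : Fin.t n -> Defs.C) :
  fsum n (fun i => Cmul c (f i)) = Cmul c (fsum n f).
Proof. revert f; induction n; intros f; simpl. csolve.
  rewrite IHn. generalize (f Fin.F1) (fsum n (fun i => f (Fin.FS i))). intros; csolve. Qed.

Lemma fsum_conj n (f : Fin.t n -> Defs.C) :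
  conjC (fsum n f) = fsum n (fun i => conjC (f i)).
Proof. revert f; induction n; intros f; simpl. csolve.
  rewrite <- IHn. generalize (f Fin.F1) (fsum n (fun i => f (Fin.FS i))). intros; csolve. Qed.

Lemma fsum_fst_nonneg n (f : Fin.t n -> Defs.C) : (forall i, 0 <= fst (f i)) -> 0 <= fst (fsum n f).
Proof. revert f; induction n; intros f H; simpl. lra.
  specialize (IHn (fun i => f (Fin.FS i)) (fun i => H _)). specialize (H Fin.F1). lra. Qed.

Lemma fsum_snd_zero n (f : Fin.t n -> Defs.C) : (forall i, snd (f i) = 0) -> snd (fsum n f) = 0.
Proof. revert f; induction n; intros f H; simpl. lra.
  rewrite (IHn (fun i => f (Fin.FS i)) (fun i => H _)), H. lra. Qed.

Lemma inner_fst_nonneg n (x : Cn n) : 0 <= fst (inner x x).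
Proof. apply fsum_fst_nonneg. intros i. destruct (x i) as [a b]; simpl. nra. Qed.

Lemma inner_snd n (x : Cn n) : snd (inner x x) = 0.
Proof. apply fsum_snd_zero. intros i. destruct (x i) as [a b]; simpl. ring. Qed.

Lemma inner_conj n (x y : Cn n) : inner y x = conjC (inner x y).
Proof. unfold inner. rewrite fsum_conj. apply fsum_ext. intros; csolve. Qed.

Lemma inner_comb n (X Y : Defs.C) (a w : Cn n) :
  inner (fun i => Cadd (Cmul X (a i)) (Cmul Y (w i))) (fun i => Cadd (Cmul X (a i)) (Cmul Y (w i)))
  = Cadd (Cadd (Cmul (Cmul X (conjC X)) (inner a a)) (Cmul (Cmul X (conjC Y)) (inner a w)))
         (Cadd (Cmul (Cmul Y (conjC X)) (inner w a)) (Cmul (Cmul Y (conjC Y)) (inner w w))).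
Proof. unfold inner. rewrite <- !fsum_scal, <- !fsum_add. apply fsum_ext. intros; csolve. Qed.

Lemma inner_scale n (x y : R) (a b : Cn n) :
  inner (vscale (RtoC x) a) (vscale (RtoC y) b) = Cmul (RtoC (x*y)) (inner a b).
Proof. unfold inner, vscale. rewrite <- fsum_scal. apply fsum_ext. intros; csolve. Qed.

Lemma inner_ext n (x x' y y' : Cn n) : (forall i, x i = x' i) -> (forall i, y i = y' i) ->
  inner x y = inner x' y'.
Proof. intros H1 H2; unfold inner; apply fsum_ext; intros; rewrite H1, H2; auto. Qed.

Lemma phi_comb n (a w : Cn n) i :
  let p := inner w a in
  let al := Cdiv p (inner a a) in
  let c := Cinv (Csub (RtoC 1) p) in
  let sg := sqrt (1 - vnorm a * vnorm a) in
  phi a w i = Cadd (Cmul (Cmul c (Cadd (Csub (RtoC 1) al) (Cmul (RtoC sg) al))) (a i))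
                   (Cmul (Cmul c (RtoC (- sg))) (w i)).
Proof. intros. unfold phi. cbv zeta. fold p. fold al. fold sg.
  unfold vscale, vsub. fold c. unfold Cdiv at 1. fold c.
  generalize (a i) (w i) c al sg. intros. csolve. Qed.

Lemma phi_id n (a w : Cn n) r2 :
  inner a a = (r2, 0) -> inner w w = (r2, 0) -> 0 < r2 < 1 ->
  let m := Cmod2 (Csub (RtoC 1) (inner w a)) in
  (m <> 0 -> m * (1 - fst (inner (phi a w) (phi a w))) = (1 - r2)^2) /\
  (m = 0 -> fst (inner (phi a w) (phi a w)) = 0).
Proof. intros Ha Hw Hr m.
  rewrite (inner_ext _ _ _ _ _ (phi_comb n a w) (phi_comb n a w)).
  rewrite inner_comb. rewrite (inner_conj n w a). rewrite Ha, Hw.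
  assert (Hv : vnorm a * vnorm a = r2).
  { unfold vnorm. rewrite Ha. simpl. apply sqrt_sqrt. lra. }
  rewrite Hv. assert (Hs := sqrt_sqrt (1 - r2) ltac:(lra)).
  revert Hs. generalize (sqrt (1 - r2)) as s. intros s Hs.
  unfold m in *. clear m. destruct (inner w a) as [p1 p2].
  unfold Cadd, Csub, Cmul, conjC, RtoC, Cdiv, Cinv, Cmod2 in *; simpl in *.
  replace (r2 / (r2 * r2 + 0 * 0)) with (/ r2) by (field; lra).
  replace (- 0 / (r2 * r2 + 0 * 0)) with 0 by (field; lra).
  split.
  - intros Hm. field_simplify; try lra. replace (s^2) with (1-r2) by nra.
    field. intro H. apply Hm.
    assert (H0 : r2^2 * ((1-p1)*(1-p1)+(0-p2)*(0-p2)) = (p1 * r2) ^ 2 - 2 * p1 * r2 ^ 2 + (p2 * r2) ^ 2 + r2 ^ 2) by ring.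
    rewrite H in H0.
    apply Rmult_integral in H0; destruct H0; [nra | auto].
  - intros Hm. assert (p1 = 1) by nra. assert (p2 = 0) by nra. rewrite H, H0. unfold Rdiv. rewrite !Rminus_diag. ring.
Qed.

Lemma bdist_lb n (a w : Cn n) r2 m0 (om : Defs.C) :
  inner a a = (r2, 0) -> inner w w = (r2, 0) -> 0 < r2 < 1 -> 0 < m0 ->
  bdist a w >= m0 -> inner a w = Cmul (RtoC r2) om ->
  r2 * Cmod (Csub (RtoC 1) om) >= (1 - r2) * (exp m0 - 1)^2 / (2 * exp m0).
Proof.
  intros Ha Hw Hr Hm0 Hb Hom.
  destruct (phi_id n a w r2 Ha Hw Hr) as [H1 H2].
  rewrite (inner_conj n a w), Hom in H1, H2.
  destruct om as [o1 o2].
  unfold bdist in Hb. cbv zeta in Hb.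
  assert (Htt := inner_fst_nonneg n (phi a w)).
  assert (Ht : vnorm (phi a w) * vnorm (phi a w) = fst (inner (phi a w) (phi a w)))
    by (unfold vnorm; apply sqrt_sqrt; auto).
  assert (Ht0 : 0 <= vnorm (phi a w)) by (unfold vnorm; apply sqrt_pos).
  revert Hb Ht Ht0. generalize (vnorm (phi a w)) as t. intros t Hb Ht Ht0.
  revert H1 H2 Ht Htt. generalize (fst (inner (phi a w) (phi a w))) as tt.
  intros tt H1 H2 Ht Htt.
  unfold Cmod2, Csub, Cmul, RtoC, conjC in H1, H2; simpl in H1, H2.
  set (m := (1 - (r2 * o1 - 0 * o2)) * (1 - (r2 * o1 - 0 * o2)) +
            (0 - - (r2 * o2 + 0 * o1)) * (0 - - (r2 * o2 + 0 * o1))) in *.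
  assert (Hmp : 0 <= m) by (unfold m; apply Rplus_le_le_0_compat; apply Rle_0_sqr).
  assert (Em : m = (1 - (r2 * o1 - 0 * o2)) * (1 - (r2 * o1 - 0 * o2)) +
            (0 - - (r2 * o2 + 0 * o1)) * (0 - - (r2 * o2 + 0 * o1))) by reflexivity.
  clearbody m.
  set (V := Cmod (Csub (RtoC 1) (o1, o2))).
  assert (EV : V = Cmod (Csub (RtoC 1) (o1, o2))) by reflexivity. clearbody V.
  assert (HV : V * V = (1 - o1)^2 + o2^2).
  { rewrite EV. unfold Cmod, Cmod2, Csub, RtoC; simpl. rewrite sqrt_sqrt. ring. apply Rplus_le_le_0_compat; apply Rle_0_sqr. }
  assert (HV0 : 0 <= V) by (rewrite EV; unfold Cmod; apply sqrt_pos).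
  assert (Ho1 : 1 - o1 <= V) by nra.
  set (c := 1 - r2). assert (Ec : c = 1 - r2) by reflexivity. clearbody c.
  assert (Hc : 0 < c) by (rewrite Ec; lra).
  assert (Hm2 : m <= (c + r2 * V)^2).
  { assert (E : (c + r2*V)^2 - m = 2*(c*r2*(V-(1-o1))) + r2^2*(V*V - ((1-o1)^2+o2^2)))
      by (rewrite Em, Ec; ring).
    rewrite HV in E. assert (0 <= c*r2*(V-(1-o1))).
    { apply Rmult_le_pos; [apply Rmult_le_pos|]; lra. }
    lra. }
  destruct (Req_dec m 0) as [Hm | Hm].
  { specialize (H2 Hm). assert (t = 0) by nra. subst t.
    replace ((1 + 0) / (1 - 0)) with 1 in Hb by field. rewrite ln_1 in Hb. lra. }
  specialize (H1 Hm).
  assert (Htt1 : tt < 1) by nra.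
  assert (Ht1 : t < 1) by nra.
  set (g := exp m0). assert (Eg : g = exp m0) by reflexivity. clearbody g.
  assert (Hg : 1 < g) by (rewrite Eg, <- exp_0; apply exp_increasing; lra).
  assert (HX : (1 + t) / (1 - t) >= g * g).
  { destruct (Rlt_or_le ((1 + t) / (1 - t)) (g * g)) as [Hl|]; [|lra].
    exfalso. assert (Hp : 0 < (1 + t) / (1 - t)) by (apply Rdiv_lt_0_compat; lra).
    apply (ln_increasing _ _ Hp) in Hl. rewrite Eg in Hl. rewrite <- exp_plus, ln_exp in Hl. lra. }
  assert (HX2 : 1 + t >= g * g * (1 - t)).
  { apply Rle_ge. apply (Rmult_le_reg_r (/ (1 - t))). apply Rinv_0_lt_compat; lra.
    replace ((1 + t) * / (1 - t)) with ((1 + t) / (1 - t)) by reflexivity.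
    replace (g * g * (1 - t) * / (1 - t)) with (g * g) by (field; lra). lra. }
  assert (Hq : (1 - tt) * (g*g+1)^2 <= 4 * (g*g)).
  { rewrite <- Ht. assert (Hu : t * (g*g+1) >= g*g - 1) by lra.
    assert (Hgg : 0 <= g*g - 1) by nra.
    assert (Hu2 : (g*g-1)*(g*g-1) <= (t*(g*g+1))*(t*(g*g+1))) by (apply Rmult_le_compat; lra).
    assert (E : (1 - t*t)*(g*g+1)^2 = (g*g+1)^2 - (t*(g*g+1))*(t*(g*g+1))) by ring.
    rewrite E. lra. }
  assert (Hmb : m * 4 * (g*g) >= c^2 * (g*g+1)^2).
  { assert (Hh : m*((1-tt)*(g*g+1)^2) <= m*(4*(g*g))) by (apply Rmult_le_compat_l; lra).
    replace (m*((1-tt)*(g*g+1)^2)) with ((m*(1-tt))*(g*g+1)^2) in Hh by ring.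
    rewrite H1, <- Ec in Hh. lra. }
  assert (Hk : (c + r2 * V) * (2 * g) >= c * (g*g+1)).
  { assert (((c + r2 * V) * (2 * g))^2 >= (c * (g*g+1))^2).
    { replace (((c + r2 * V) * (2 * g))^2) with ((c + r2 * V)^2 * 4 * (g * g)) by ring.
      replace ((c * (g*g+1))^2) with (c^2 * (g*g+1)^2) by ring.
      assert (Hh : m * (4*(g*g)) <= (c + r2 * V)^2 * (4*(g*g))) by (apply Rmult_le_compat_r; nra).
      lra. }
    assert (Hp1 : 0 <= (c + r2 * V) * (2 * g)) by (apply Rmult_le_pos; nra).
    assert (Hp2 : 0 <= c * (g*g+1)) by (apply Rmult_le_pos; nra).
    destruct (Rlt_or_le ((c + r2 * V) * (2 * g)) (c * (g*g+1))) as [Hl|]; [|lra].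
    exfalso. assert (Hl2 : ((c + r2 * V) * (2 * g)) * ((c + r2 * V) * (2 * g)) < (c * (g*g+1)) * (c * (g*g+1))).
    { apply Rle_lt_trans with (((c + r2 * V) * (2 * g)) * (c * (g*g+1))).
      apply Rmult_le_compat_l; lra. apply Rmult_lt_compat_r; lra. }
    lra. }
  apply Rle_ge. apply (Rmult_le_reg_r (2 * g)). lra.
  replace ((1 - r2) * (g - 1) ^ 2 / (2 * g) * (2 * g)) with (c * (g-1)^2) by (rewrite Ec; field; lra).
  assert (E : c * (g*g+1) - c * (2*g) = c*(g-1)^2) by ring.
  replace (c * (g - 1) ^ 2 / (2 * g) * (2 * g)) with (c*(g-1)^2) by (field; lra). lra.
Qed.

Lemma ratio_lemma Y s : 1 < Y -> s * (1 + Y) = Y - 1 -> 0 < s < 1 /\ (1 - s * s) * Y >= 1.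
Proof. intros HY Hs.
  assert (Es : s = (Y - 1) / (1 + Y)) by (rewrite <- Hs; field; lra).
  split. { rewrite Es. split. apply Rdiv_lt_0_compat; lra.
    apply (Rmult_lt_reg_r (1 + Y)); [lra|]. unfold Rdiv. rewrite Rmult_assoc, Rinv_l; lra. }
  assert (E : ((1 - s*s) * Y - 1) * ((1+Y)*(1+Y)) = (Y-1)*(3*Y+1)).
  { replace (((1 - s*s) * Y - 1) * ((1+Y)*(1+Y))) with (Y*(1+Y)*(1+Y) - (s*(1+Y))*(s*(1+Y))*Y - (1+Y)*(1+Y)) by ring.
    rewrite Hs. ring. }
  assert (0 <= (Y-1)*(3*Y+1)) by (apply Rmult_le_pos; lra).
  destruct (Rlt_or_le ((1 - s * s) * Y) 1) as [Hl|]; [|lra]. exfalso.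
  assert (((1 - s*s) * Y - 1) * ((1+Y)*(1+Y)) < 0).
  { apply Rmult_neg_pos; [lra|]. apply Rmult_lt_0_compat; lra. }
  lra.
Qed.

Lemma inner_zero_r n (u : Cn n) : inner u origin = (0, 0).
Proof. unfold inner. transitivity (fsum n (fun i => Cmul (0,0) (u i))).
  apply fsum_ext; intros; unfold origin; csolve.
  rewrite fsum_scal. csolve. Qed.

Lemma inner_zero_l n (u : Cn n) : inner origin u = (0, 0).
Proof. unfold inner. transitivity (fsum n (fun i => Cmul (0,0) (u i))).
  apply fsum_ext; intros; unfold origin; csolve.
  rewrite fsum_scal. csolve. Qed.

Lemma vnorm_phi0 n (u : Cn n) : vnorm (phi origin u) = vnorm u.
Proof. unfold vnorm. f_equal.
  rewrite (inner_ext _ _ _ _ _ (phi_comb n origin u) (phi_comb n origin u)).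
  rewrite inner_comb. rewrite !inner_zero_l, !inner_zero_r.
  assert (Hv : vnorm (@origin n) = 0).
  { unfold vnorm. rewrite inner_zero_l. simpl. apply sqrt_0. }
  rewrite Hv. replace (1 - 0 * 0) with 1 by ring. rewrite sqrt_1.
  destruct (inner u u) as [x1 x2].
  unfold Cadd, Csub, Cmul, conjC, RtoC, Cdiv, Cinv, Cmod2; simpl. generalize (0 / (0 * 0 + 0 * 0)) (- 0 / (0 * 0 + 0 * 0)). intros. field.
Qed.

Lemma sphere_facts n rho (u : Cn n) : 0 < rho -> sphere rho u ->
  inner u u = (vnorm u * vnorm u, 0) /\
  vnorm u * (1 + exp rho * exp rho) = exp rho * exp rho - 1.
Proof. intros Hr [Hb Hd]. split.
  { assert (H1 := inner_snd n u). assert (H2 := inner_fst_nonneg n u).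
    unfold vnorm. rewrite sqrt_sqrt; auto. destruct (inner u u); simpl in *; subst; auto. }
  unfold bdist in Hd. cbv zeta in Hd. rewrite vnorm_phi0 in Hd. unfold in_ball in Hb.
  assert (H0 : 0 <= vnorm u) by (unfold vnorm; apply sqrt_pos).
  revert Hb Hd H0. generalize (vnorm u). intros t Hb Hd H0.
  assert (Hl : ln ((1 + t) / (1 - t)) = rho + rho) by lra.
  assert (Hp : 0 < (1 + t) / (1 - t)) by (apply Rdiv_lt_0_compat; lra).
  assert (HX : (1 + t) / (1 - t) = exp rho * exp rho).
  { rewrite <- exp_plus, <- Hl, exp_ln; auto. }
  assert (1 + t = exp rho * exp rho * (1 - t)).
  { rewrite <- HX. field. lra. }
  lra.
Qed.

Lemma tanh_facts R0 : tanh R0 * (1 + exp R0 * exp R0) = exp R0 * exp R0 - 1.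
Proof. unfold tanh, sinh, cosh. rewrite exp_Ropp. assert (0 < exp R0) by apply exp_pos.
  field. split; [lra|]. assert (0 < exp R0 * exp R0 + 1) by nra. intro H1.
  assert ((exp R0 + / exp R0) * exp R0 = exp R0 * exp R0 + 1) by (field; lra).
  rewrite H1 in H2. lra. Qed.

Lemma self_dist n (a : Cn n) r2 m0 : inner a a = (r2, 0) -> 0 < r2 < 1 -> 0 < m0 -> bdist a a < m0.
Proof. intros Ha Hr Hm. destruct (Rlt_or_le (bdist a a) m0) as [|Hl]; auto. exfalso.
  assert (H := bdist_lb n a a r2 m0 (1, 0) Ha Ha Hr Hm (Rle_ge _ _ Hl)).
  assert (H' : inner a a = Cmul (RtoC r2) (1, 0)) by (rewrite Ha; csolve).
  specialize (H H').
  assert (E : Cmod (Csub (RtoC 1) (1, 0)) = 0).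
  { unfold Cmod, Cmod2, Csub, RtoC; simpl. replace ((1 - 1) * (1 - 1) + (0 - 0) * (0 - 0)) with 0 by ring. apply sqrt_0. }
  rewrite E in H. assert (1 < exp m0) by (rewrite <- exp_0; apply exp_increasing; lra).
  assert (0 < (1 - r2) * (exp m0 - 1) ^ 2 / (2 * exp m0)).
  { apply Rdiv_lt_0_compat; [apply Rmult_lt_0_compat; [lra| apply pow_lt; lra]|lra]. }
  lra.
Qed.

Lemma final_ineq B y h G tr2 s2 : 1 < y -> 1 < h -> 1 < G -> 0 <= B -> 0 < tr2 < 1 -> 0 < s2 < 1 ->
  (1 - tr2) * ((y*h)*(y*h)) >= 1 -> (1 - s2) * (y*y) >= 1 ->
  tr2 * B >= (1 - tr2) * (G - 1)^2 / (2 * G) -> s2 * B >= (1 - s2) * (h - 1)^2 / (2 * h) ->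
  (G - 1) * (/ y * / y) <= (4 * h * h + 2 * h / ((h - 1)^2)) * B.
Proof. intros Hy Hh HG HB Ht Hs Ht2 Hs2 HA HBs.
  set (P := B * (y * y)).
  assert (HP0 : 0 <= P) by (unfold P; apply Rmult_le_pos; nra).
  assert (HBt : B >= tr2 * B) by nra.
  assert (HBs2 : B >= s2 * B) by nra.
  assert (HA' : P * (2 * G * (h*h)) >= (G-1)^2).
  { assert (E1 : B * (2*G) >= (1 - tr2) * (G-1)^2).
    { assert (tr2 * B * (2*G) >= (1 - tr2) * (G - 1)^2 / (2 * G) * (2*G)) by (apply Rmult_ge_compat_r; lra).
      replace ((1 - tr2) * (G - 1)^2 / (2 * G) * (2*G)) with ((1 - tr2) * (G - 1)^2) in H by (field; lra).
      nra. }
    unfold P. replace (B * (y * y) * (2 * G * (h * h))) with ((B * (2*G)) * ((y*h)*(y*h))) by ring.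
    assert (0 <= (G-1)^2) by (apply pow2_ge_0).
    apply Rge_trans with ((1 - tr2) * (G-1)^2 * ((y*h)*(y*h))).
    apply Rmult_ge_compat_r; nra.
    replace ((1 - tr2) * (G - 1) ^ 2 * (y * h * (y * h))) with ((G-1)^2 * ((1 - tr2) * (y * h * (y * h)))) by ring.
    nra. }
  assert (HB' : P * (2 * h) >= (h-1)^2).
  { assert (E1 : B * (2*h) >= (1 - s2) * (h-1)^2).
    { assert (s2 * B * (2*h) >= (1 - s2) * (h - 1)^2 / (2 * h) * (2*h)) by (apply Rmult_ge_compat_r; lra).
      replace ((1 - s2) * (h - 1)^2 / (2 * h) * (2*h)) with ((1 - s2) * (h - 1)^2) in H by (field; lra).
      nra. }
    unfold P. replace (B * (y * y) * (2 * h)) with ((B * (2*h)) * (y*y)) by ring.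
    assert (0 <= (h-1)^2) by (apply pow2_ge_0).
    apply Rge_trans with ((1 - s2) * (h-1)^2 * (y*y)).
    apply Rmult_ge_compat_r; nra.
    replace ((1 - s2) * (h - 1) ^ 2 * (y * y)) with ((h-1)^2 * ((1 - s2) * (y * y))) by ring.
    nra. }
  assert (Hgoal : G - 1 <= (4 * h * h + 2 * h / ((h - 1)^2)) * P).
  { assert (Hq : 0 < (h-1)^2) by (apply pow_lt; lra).
    assert (Hk : 0 <= 2 * h / ((h - 1)^2)) by (apply Rlt_le, Rdiv_lt_0_compat; lra).
    destruct (Rle_or_lt 2 G) as [HG2|HG2].
    - assert (Hc : (G-1)^2 >= (G-1) * G / 2) by nra.
      assert (P * (4 * h * h) >= G - 1).
      { assert (P * (2*G*(h*h)) >= (G-1)*G/2) by lra.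
        assert (E : P * (4*h*h) * G = 2 * (P * (2*G*(h*h)))) by ring.
        apply Rnot_lt_ge; intro Hl.
        assert (P * (4*h*h) * G < (G-1) * G) by (apply Rmult_lt_compat_r; lra). lra. }
      assert (0 <= 2 * h / (h - 1) ^ 2 * P) by (apply Rmult_le_pos; lra). nra.
    - assert (1 <= 2 * h / ((h - 1)^2) * P).
      { replace (2 * h / (h - 1) ^ 2 * P) with (P * (2*h) / (h-1)^2) by (field; lra).
        apply (Rmult_le_reg_r ((h-1)^2)); auto. unfold Rdiv. rewrite Rmult_assoc, Rinv_l; lra. }
      assert (0 <= 4 * h * h * P) by (apply Rmult_le_pos; nra). nra. }
  unfold P in Hgoal.
  replace ((G - 1) * (/ y * / y)) with ((G - 1) / (y*y)) by (field; lra).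
  apply (Rmult_le_reg_r (y*y)). nra.
  replace ((G - 1) / (y*y) * (y*y)) with (G-1) by (field; lra). lra.
Qed.

Theorem lemma2p3 (n : nat) (lam : R) :
  (1 <= n)%nat -> 0 < lam ->
  exists K : R, 0 < K /\
    forall (J : nat -> nat) (z : nat -> nat -> Cn n) (Q : nat -> nat -> Cn n -> Prop),
      is_bergman_tree n lam J z Q ->
      forall (M : R), 0 < M ->
      forall (N j j' : nat), (1 <= N)%nat -> (j < J N)%nat -> (j' < J N)%nat ->
        bdist (center lam z N j) (center lam z N j') > M ->
        sqrt (exp M - 1) * exp (- (lam * INR N))
          <= K * beta (normalize (center lam z N j)) (normalize (center lam z N j')).
Proof.
  intros Hn Hlam.
  set (h := exp (lam / 2)).
  assert (Hh : 1 < h) by (unfold h; rewrite <- exp_0; apply exp_increasing; lra).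
  assert (Hq : 0 < (h-1)^2) by (apply pow_lt; lra).
  assert (Hk : 0 <= 2 * h / ((h - 1)^2)) by (apply Rlt_le, Rdiv_lt_0_compat; lra).
  exists (sqrt (4 * h * h + 2 * h / ((h - 1)^2))). split.
  { apply sqrt_lt_R0. nra. }
  intros J z Q HT M HM N j j' HN Hj Hj' Hd.
  destruct (HT N HN) as (Hz & _ & Hsph & _ & Huniq & Hin & _).
  assert (HNr : 1 <= INR N) by (apply (le_INR 1); auto).
  set (rho := lam * INR N).
  assert (Hrho : 0 < rho) by (unfold rho; nra).
  set (y := exp rho).
  assert (Hy : 1 < y) by (unfold y; rewrite <- exp_0; apply exp_increasing; lra).
  set (u := z N j). set (u' := z N j').
  destruct (sphere_facts n rho u Hrho (Hz j Hj)) as [Hu1 Hu2].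
  destruct (sphere_facts n rho u' Hrho (Hz j' Hj')) as [Hu1' Hu2'].
  fold y in Hu2, Hu2'.
  set (s := vnorm u) in *.
  assert (Ess : vnorm u' = s).
  { apply (Rmult_eq_reg_r (1 + y * y)). rewrite Hu2, Hu2'. auto. nra. }
  rewrite Ess in Hu1'.
  destruct (ratio_lemma (y*y) s ltac:(nra) Hu2) as [Hs Hs2].
  set (R0 := lam * (INR N + / 2)).
  assert (ER : exp R0 = y * h).
  { unfold y, h, R0, rho. rewrite <- exp_plus. f_equal. field. }
  set (tr := tanh R0).
  assert (Htr := tanh_facts R0). fold tr in Htr. rewrite ER in Htr.
  destruct (ratio_lemma ((y*h)*(y*h)) tr ltac:(nra) Htr) as [Htr1 Htr2].
  set (k := tr / s).
  assert (Ec : center lam z N j = vscale (RtoC k) u) by reflexivity.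
  assert (Ec' : center lam z N j' = vscale (RtoC k) u').
  { unfold center, Pr. fold R0. fold tr. fold u'. rewrite Ess. reflexivity. }
  rewrite Ec, Ec' in *.
  assert (Hcc : inner (vscale (RtoC k) u) (vscale (RtoC k) u) = (tr*tr, 0)).
  { rewrite inner_scale, Hu1. unfold k. csolve; field; lra. }
  assert (Hcc' : inner (vscale (RtoC k) u') (vscale (RtoC k) u') = (tr*tr, 0)).
  { rewrite inner_scale, Hu1'. unfold k. csolve; field; lra. }
  assert (Hn1 : vnorm (vscale (RtoC k) u) = tr).
  { unfold vnorm. rewrite Hcc. simpl. apply sqrt_square. lra. }
  assert (Hn2 : vnorm (vscale (RtoC k) u') = tr).
  { unfold vnorm. rewrite Hcc'. simpl. apply sqrt_square. lra. }
  unfold beta, normalize. rewrite Hn1, Hn2.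
  set (om := inner (vscale (RtoC (/ tr)) (vscale (RtoC k) u)) (vscale (RtoC (/ tr)) (vscale (RtoC k) u'))).
  assert (Eom : om = Cmul (RtoC (/tr * /tr)) (Cmul (RtoC (k*k)) (inner u u'))).
  { unfold om. rewrite !inner_scale. reflexivity. }
  assert (Hw1 : inner (vscale (RtoC k) u) (vscale (RtoC k) u') = Cmul (RtoC (tr*tr)) om).
  { rewrite Eom, inner_scale. destruct (inner u u'). csolve; field; lra. }
  assert (Hw2 : inner u u' = Cmul (RtoC (s*s)) om).
  { rewrite Eom. unfold k. destruct (inner u u'). csolve; field; lra. }
  clearbody om.
  assert (Htr01 : 0 < tr*tr < 1) by nra.
  assert (Hs01 : 0 < s*s < 1) by nra.
  assert (HA := bdist_lb n _ _ (tr*tr) M om Hcc Hcc' Htr01 HM (Rgt_ge _ _ Hd) Hw1).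
  assert (HBs : bdist u u' >= lam / 2).
  { destruct (Rlt_or_le (bdist u u') (lam / 2)) as [Hl|]; [|lra]. exfalso.
    destruct (Nat.eq_dec j j') as [<-|Hne].
    - assert (Euu : u' = u) by reflexivity. rewrite Euu in Hd.
      assert (H := self_dist n (vscale (RtoC k) u) (tr*tr) M Hcc Htr01 HM). lra.
    - apply Hne. apply (Huniq j j' u'); auto.
      + apply Hin; auto. split; auto. apply Hz; auto.
      + apply Hin; auto. split. apply Hz; auto. apply (self_dist n u' (s*s)); auto. lra. }
  assert (HB2 := bdist_lb n u u' (s*s) (lam/2) om Hu1 Hu1' Hs01 ltac:(lra) HBs Hw2).
  fold h in HB2.
  set (B := Cmod (Csub (RtoC 1) om)) in *.
  assert (HB0 : 0 <= B) by (unfold B, Cmod; apply sqrt_pos).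
  assert (HG : 1 < exp M) by (rewrite <- exp_0; apply exp_increasing; lra).
  assert (HF := final_ineq B y h (exp M) (tr*tr) (s*s) Hy Hh HG HB0 Htr01 Hs01 Htr2 Hs2 HA HB2).
  fold rho. rewrite exp_Ropp. fold y.
  rewrite <- sqrt_mult by (nra || lra).
  replace (/ y) with (sqrt (/ y * / y)).
  2:{ apply sqrt_square. apply Rlt_le, Rinv_0_lt_compat. lra. }
  rewrite <- sqrt_mult.
  - apply sqrt_le_1_alt. exact HF.
  - lra.
  - assert (0 < / y) by (apply Rinv_0_lt_compat; lra). nra.
Qed.
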